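(* Let $m\ge 4$ and $n\ge 5$ be integers with $n$ odd. On an $m\times n$ board with White king on $(m,1)$, White rook on $(1,1)$, Black king on $(m,n)$, and White to move, White can force checkmate within $n$ moves.
   Context: The board is the set of squares $(x,y)$ with $1\le x\le m$ (column) and $1\le y\le n$ (row). The pieces move and capture as in ordinary chess, restricted to this rectangular board: a king moves to any of the up to eight adjacent squares, and a rook moves any number of squares along its row or column without passing through another piece. The usual legality rules apply: a king may not move to a square attacked by an enemy piece, and the kings may never be adjacent. Black is checkmated if the Black king is attacked and Black has no legal move. ''White can force checkmate within $k$ moves'' means White has a strategy such that, against every sequence of legal Black replies, Black is checkmated by one of White's first $k$ moves; the players alternate, White first. *)

(* Defs.v *)
From Stdlib Require Import Arith Lia.

(* A square is (x, y): column x in 1..m, row y in 1..n. *)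
Definition square := (nat * nat)%type.

Definition on_board (m n : nat) (s : square) : Prop :=
  1 <= fst s <= m /\ 1 <= snd s <= n.

Definition adj (a b : square) : Prop :=
  a <> b /\
  fst a <= fst b + 1 /\ fst b <= fst a + 1 /\
  snd a <= snd b + 1 /\ snd b <= snd a + 1.

Definition strictly_between (a b c : nat) : Prop :=
  (a < b /\ b < c) \/ (c < b /\ b < a).

(* A rook on r attacks (or can slide to) square t, the only other piece that
   may obstruct the line being on square o (o is not strictly between r and t). *)
Definition rook_line (r t o : square) : Prop :=
  (fst r = fst t /\ snd r <> snd t /\
     ~ (fst o = fst r /\ strictly_between (snd r) (snd o) (snd t))) \/
  (snd r = snd t /\ fst r <> fst t /\
     ~ (snd o = snd r /\ strictly_between (fst r) (fst o) (fst t))).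

(* A position: White king, White rook (None once captured), Black king. *)
Record position := Pos { wk : square; wr : option square; bk : square }.

Definition black_in_check (p : position) : Prop :=
  exists r, wr p = Some r /\ rook_line r (bk p) (wk p).

Definition white_move (m n : nat) (p p' : position) : Prop :=
  (exists t, on_board m n t /\ adj (wk p) t /\ wr p <> Some t /\
     t <> bk p /\ ~ adj t (bk p) /\
     p' = Pos t (wr p) (bk p)) \/
  (exists r t, wr p = Some r /\ on_board m n t /\
     rook_line r t (wk p) /\ rook_line r t (bk p) /\
     t <> wk p /\ t <> bk p /\
     p' = Pos (wk p) (Some t) (bk p)).

(* The Black king moves to an
   adjacent square not adjacent to the White king and not attacked by the rook
   (Black's king having left its square, only the White king can block the
   rook); it may capture an unprotected rook. *)
Definition black_move (m n : nat) (p p' : position) : Prop :=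
  exists s, on_board m n s /\ adj (bk p) s /\ s <> wk p /\ ~ adj s (wk p) /\
    match wr p with
    | None => p' = Pos (wk p) None s
    | Some r =>
        (s = r /\ p' = Pos (wk p) None s) \/
        (s <> r /\ ~ rook_line r s (wk p) /\ p' = Pos (wk p) (Some r) s)
    end.

Definition checkmated (m n : nat) (p : position) : Prop :=
  black_in_check p /\ forall p', ~ black_move m n p p'.

(* White (to move in p) can force checkmate within k moves: White has a legal
   move that either checkmates, or leaves Black with at least one legal move
   (otherwise it is stalemate) and after every legal Black reply White can
   force checkmate within k-1 moves. *)
Fixpoint white_mates_within (m n k : nat) (p : position) : Prop :=
  match k with
  | 0 => False
  | S k' =>
      exists p', white_move m n p p' /\
        (checkmated m n p' \/
         ((exists p'', black_move m n p' p'') /\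
          forall p'', black_move m n p' p'' -> white_mates_within m n k' p''))
  end.

(* Main.v *)
Require Import Defs.
From Stdlib Require Import Arith Lia.

Lemma pneq (a b c d : nat) : (a, b) <> (c, d) <-> (a <> c \/ b <> d).
Proof. split; intro H. destruct (Nat.eq_dec a c); destruct (Nat.eq_dec b d); subst; tauto.
  intro E; injection E; lia. Qed.

Lemma adj_eq (a b c d : nat) : adj (a, b) (c, d) <->
  ((a <> c \/ b <> d) /\ a <= c + 1 /\ c <= a + 1 /\ b <= d + 1 /\ d <= b + 1).
Proof. unfold adj; simpl; rewrite pneq; tauto. Qed.

Ltac norm := cbn [wk wr bk fst snd] in *; unfold on_board, rook_line, strictly_between, black_in_check in *;
  cbn [wk wr bk fst snd] in *;
  repeat rewrite adj_eq in *; repeat rewrite pneq in *.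

Lemma bm_inv m n a b c d e f p :
  black_move m n (Pos (a, b) (Some (c, d)) (e, f)) p ->
  exists x y, 1 <= x <= m /\ 1 <= y <= n /\ adj (e, f) (x, y) /\ (x, y) <> (a, b) /\
   ~ adj (x, y) (a, b) /\
   (((x, y) = (c, d) /\ p = Pos (a, b) None (x, y)) \/
    ((x, y) <> (c, d) /\ ~ rook_line (c, d) (x, y) (a, b) /\ p = Pos (a, b) (Some (c, d)) (x, y))).
Proof. intros [[x y] [H1 [H2 [H3 [H4 H5]]]]]; exists x, y; unfold on_board in H1; simpl in *; tauto. Qed.

Lemma s1 m n : 4 <= m -> 5 <= n ->
  white_mates_within m n 1 (Pos (m - 1, n - 2) (Some (m - 2, 1)) (m, n)).
Proof.
  intros Hm Hn. simpl.
  exists (Pos (m - 1, n - 2) (Some (m - 2, n)) (m, n)). split.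
  { right. exists (m - 2, 1), (m - 2, n). norm. repeat split; try lia. }
  left. split.
  { exists (m - 2, n). norm. split; [reflexivity|]. lia. }
  intros p Hp. apply bm_inv in Hp. destruct Hp as [x [y [G1 [G2 [G3 [G4 [G5 G6]]]]]]].
  norm. destruct G6 as [[E _] | [_ [G7 _]]]; [injection E; lia| lia].
Qed.
Lemma s2 m n : 4 <= m -> 5 <= n ->
  white_mates_within m n 2 (Pos (m - 1, n - 2) (Some (m - 1, 1)) (m - 1, n)).
Proof.
  intros Hm Hn. cbn [white_mates_within].
  exists (Pos (m - 1, n - 2) (Some (m - 2, 1)) (m - 1, n)). split.
  { right. exists (m - 1, 1), (m - 2, 1). norm. repeat split; try lia. }
  right. split.
  { exists (Pos (m - 1, n - 2) (Some (m - 2, 1)) (m, n)).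
    exists (m, n). norm. repeat split; try lia. right. split; [lia|]. split; [|reflexivity]. lia. }
  intros p Hp. apply bm_inv in Hp. destruct Hp as [x [y [H1' [H2' [H3' [H4' [H5' H6']]]]]]].
  norm.
  destruct H6' as [[E _] | [_ [H7' ->]]]; [injection E; lia|].
  assert (x = m /\ y = n) as [-> ->] by lia.
  apply s1; lia.
Qed.
Lemma final m n : 4 <= m -> 5 <= n ->
  white_mates_within m n 3 (Pos (m, n - 3) (Some (m - 1, 1)) (m, n)).
Proof.
  intros Hm Hn. cbn [white_mates_within].
  exists (Pos (m - 1, n - 2) (Some (m - 1, 1)) (m, n)). split.
  { left. exists (m - 1, n - 2). norm. repeat split; try lia; try (intro E; injection E; lia); try reflexivity. }
  right. split.
  { exists (Pos (m - 1, n - 2) (Some (m - 1, 1)) (m - 1, n)).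
    exists (m - 1, n). norm. repeat split; try lia. right. split; [lia|]. split; [|reflexivity]. lia. }
  intros p Hp. apply bm_inv in Hp. destruct Hp as [x [y [H1 [H2 [H3 [H4 [H5 H6]]]]]]].
  norm.
  destruct H6 as [[E _] | [_ [H7 ->]]]; [injection E; lia|].
  assert (x = m - 1 /\ y = n) as [-> ->] by lia.
  apply s2; lia.
Qed.
Lemma climb m n : 4 <= m -> 5 <= n -> forall d w y, w + d = n -> 3 <= d -> 1 <= w ->
  (exists i, y = w + 3 + 2 * i) -> y <= n ->
  white_mates_within m n d (Pos (m, w) (Some (m - 1, 1)) (m, y)).
Proof.
  intros Hm Hn d. induction d as [|d IH]; intros w y Hd H3 Hw [i Hi] Hy; [lia|].
  destruct (Nat.eq_dec d 2) as [E|E].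
  { subst d. replace w with (n - 3) by lia. replace y with n by lia. apply final; lia. }
  cbn [white_mates_within].
  exists (Pos (m, w + 1) (Some (m - 1, 1)) (m, y)). split.
  { left. exists (m, w + 1). norm. repeat split; try lia; try (intro E'; injection E'; lia); try reflexivity. }
  right. split.
  { destruct (Nat.eq_dec y n) as [Ey|Ey].
    - exists (Pos (m, w + 1) (Some (m - 1, 1)) (m, y - 1)).
      exists (m, y - 1). norm. repeat split; try lia. right. split; [lia|]. split; [|reflexivity]. lia.
    - exists (Pos (m, w + 1) (Some (m - 1, 1)) (m, y + 1)).
      exists (m, y + 1). norm. repeat split; try lia. right. split; [lia|]. split; [|reflexivity]. lia. }
  intros p Hp. apply bm_inv in Hp. destruct Hp as [x [z [H1 [H2 [H4 [H5 [H6 H7]]]]]]].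
  norm.
  destruct H7 as [[E' _] | [_ [H8 ->]]]; [injection E'; lia|].
  assert (x = m) as -> by lia.
  apply IH; try lia.
  assert (z = y + 1 \/ z = y - 1) as [-> | ->] by lia.
  - exists i; lia.
  - exists (i - 1); lia.
Qed.

Theorem lemma1 (m n : nat) :
  4 <= m -> 5 <= n -> Nat.odd n = true ->
  white_mates_within m n n (Pos (m, 1) (Some (1, 1)) (m, n)).
Proof.
  intros Hm Hn Ho.
  apply Nat.odd_spec in Ho. destruct Ho as [k Hk].
  destruct n as [|n']; [lia|]. cbn [white_mates_within].
  exists (Pos (m, 1) (Some (m - 1, 1)) (m, S n')). split.
  { right. exists (1, 1), (m - 1, 1). norm. repeat split; try lia. }
  right. split.
  { exists (Pos (m, 1) (Some (m - 1, 1)) (m, n')).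
    exists (m, n'). norm. repeat split; try lia. right. split; [lia|]. split; [|reflexivity]. lia. }
  intros p Hp. apply bm_inv in Hp. destruct Hp as [x [z [H1 [H2 [H4 [H5 [H6 H7]]]]]]].
  norm.
  destruct H7 as [[E' _] | [_ [H8 ->]]]; [injection E'; lia|].
  assert (x = m /\ z = n') as [-> ->] by lia.
  apply climb; try lia. exists (k - 2). lia.
Qed.
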